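(* Let $\mathcal Q,\mathcal R$ be polynomials in three complex variables. Then $$\mathcal Q(\Lambda^3,\Lambda^7_{1,1},M^8)+\Lambda^5_1\,\mathcal R(\Lambda^3,\Lambda^7_{1,1},M^8)\Big|_{f_1'=0}\equiv0$$ holds identically in $\mathbb C[f_2',f_1'',f_2'',f_1''',f_2''',f_1'''',f_2'''']$ if and only if $\mathcal Q$ and $\mathcal R$ are both identically zero.
   Context: $f_i^{(\lambda)}$ ($i\in\{1,2\}$, $\lambda\ge1$) are independent indeterminates; $\Delta^{\alpha,\beta}:=f_1^{(\alpha)}f_2^{(\beta)}-f_1^{(\beta)}f_2^{(\alpha)}$. $\Lambda^3:=\Delta^{1,2}$; $\Lambda^5_1:=\Delta^{1,3}f_1'-3\Delta^{1,2}f_1''$; $\Lambda^7_{1,1}:=(\Delta^{1,4}+4\Delta^{2,3})(f_1')^2-10\Delta^{1,3}f_1'f_1''+15\Delta^{1,2}(f_1'')^2$; $M^8:=3\Delta^{1,4}\Delta^{1,2}+12\Delta^{2,3}\Delta^{1,2}-5(\Delta^{1,3})^2$. ''$|_{f_1'=0}$'' means substituting $f_1'=0$. *)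

(* Defs.v *)
From HB Require Import structures.
From mathcomp Require Import all_boot all_order all_algebra.
Set Implicit Arguments. Unset Strict Implicit. Unset Printing Implicit Defensive.
Import Order.TTheory GRing.Theory Num.Theory.
Local Open Scope ring_scope.

(* Jet expressions, defined generically over a commutative ring R;
   f1 n, f2 n stand for f_1^(n), f_2^(n). *)
Section Jets.
Variable R : comNzRingType.
Variables f1 f2 : nat -> R.

Definition Delta (a b : nat) : R := f1 a * f2 b - f1 b * f2 a.
Definition Lambda3 : R := Delta 1 2.
Definition Lambda5_1 : R := Delta 1 3 * f1 1 - 3%:R * Delta 1 2 * f1 2.
Definition Lambda7_11 : R :=
  (Delta 1 4 + 4%:R * Delta 2 3) * f1 1 ^+ 2 - 10%:R * Delta 1 3 * f1 1 * f1 2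
  + 15%:R * Delta 1 2 * f1 2 ^+ 2.
Definition M8 : R :=
  3%:R * Delta 1 4 * Delta 1 2 + 12%:R * Delta 2 3 * Delta 1 2 - 5%:R * Delta 1 3 ^+ 2.
End Jets.

(* Polynomials in three variables over F: {poly {poly {poly F}}}, the outermost
   variable being the first one.  eval3 c Q x y z = Q(x,y,z) in a commutative
   ring S, with coefficients mapped into S via c. *)
Definition eval3 (F : comNzRingType) (S : comNzRingType) (c : F -> S)
  (Q : {poly {poly {poly F}}}) (x y z : S) : S :=
  (map_poly (fun q : {poly {poly F}} =>
     (map_poly (fun r : {poly F} => (map_poly c r).[z]) q).[y]) Q).[x].

Definition P7 (F : comNzRingType) :=
  {poly {poly {poly {poly {poly {poly {poly F}}}}}}}.

Definition cst7 (F : comNzRingType) (a : F) : P7 F :=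
  a%:P%:P%:P%:P%:P%:P%:P.

Definition X1 (F : comNzRingType) : P7 F := 'X.
Definition X2 (F : comNzRingType) : P7 F := ('X)%:P.
Definition X3 (F : comNzRingType) : P7 F := ('X)%:P%:P.
Definition X4 (F : comNzRingType) : P7 F := ('X)%:P%:P%:P.
Definition X5 (F : comNzRingType) : P7 F := ('X)%:P%:P%:P%:P.
Definition X6 (F : comNzRingType) : P7 F := ('X)%:P%:P%:P%:P%:P.
Definition X7 (F : comNzRingType) : P7 F := ('X)%:P%:P%:P%:P%:P%:P.

(* The jets after the substitution f_1' = 0:
   f1' = 0, f1'' = X2, f1''' = X4, f1'''' = X6;
   f2' = X1, f2'' = X3, f2''' = X5, f2'''' = X7.
   (Orders other than 1..4 never occur in the expressions.) *)
Definition f1sub (F : comNzRingType) (n : nat) : P7 F :=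
  match n with 2 => X2 F | 3 => X4 F | 4 => X6 F | _ => 0 end.
Definition f2sub (F : comNzRingType) (n : nat) : P7 F :=
  match n with 1 => X1 F | 2 => X3 F | 3 => X5 F | 4 => X7 F | _ => 0 end.

Definition combo (F : comNzRingType) (Q R : {poly {poly {poly F}}}) : P7 F :=
  let f1 := f1sub F in let f2 := f2sub F in
  eval3 (@cst7 F) Q (Lambda3 f1 f2) (Lambda7_11 f1 f2) (M8 f1 f2)
  + Lambda5_1 f1 f2 * eval3 (@cst7 F) R (Lambda3 f1 f2) (Lambda7_11 f1 f2) (M8 f1 f2).

(* Main.v *)
Require Import Defs.
From HB Require Import structures.
From mathcomp Require Import all_boot all_order all_algebra.
From Stdlib Require Import FunctionalExtensionality.
Import GRing.Theory Num.Theory.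
Local Open Scope ring_scope.

Lemma eval3_morph (F S T : comNzRingType) (c : F -> S) (phi : {rmorphism S -> T}) Q x y z :
  phi (eval3 c Q x y z) = eval3 (phi \o c) Q (phi x) (phi y) (phi z).
Proof.
rewrite /eval3 -horner_map -map_poly_comp; congr horner; apply: eq_map_poly => q /=.
rewrite -horner_map -map_poly_comp; congr horner; apply: eq_map_poly => r /=.
by rewrite -horner_map -map_poly_comp.
Qed.

Lemma Delta_morph (S T : comNzRingType) (phi : {rmorphism S -> T}) f1 f2 a b :
  phi (Delta f1 f2 a b) = Delta (phi \o f1) (phi \o f2) a b.
Proof. by rewrite /Delta rmorphB !rmorphM. Qed.

Definition G {F S : comNzRingType} (Q R : {poly {poly {poly F}}}) (c : F -> S) (f1 f2 : nat -> S) :=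
  eval3 c Q (Lambda3 f1 f2) (Lambda7_11 f1 f2) (M8 f1 f2)
  + Lambda5_1 f1 f2 * eval3 c R (Lambda3 f1 f2) (Lambda7_11 f1 f2) (M8 f1 f2).

Lemma G_morph (F S T : comNzRingType) Q R (c : F -> S) (phi : {rmorphism S -> T}) f1 f2 :
  phi (G Q R c f1 f2) = G Q R (phi \o c) (phi \o f1) (phi \o f2).
Proof.
rewrite /G rmorphD rmorphM !eval3_morph.
have E3: phi (Lambda3 f1 f2) = Lambda3 (phi \o f1) (phi \o f2).
  by rewrite /Lambda3 Delta_morph.
have E5: phi (Lambda5_1 f1 f2) = Lambda5_1 (phi \o f1) (phi \o f2).
  by rewrite /Lambda5_1 ?(rmorph_nat, Delta_morph, rmorphB, rmorphD, rmorphN, rmorphM, rmorphXn).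
have E7: phi (Lambda7_11 f1 f2) = Lambda7_11 (phi \o f1) (phi \o f2).
  by rewrite /Lambda7_11 ?(rmorph_nat, Delta_morph, rmorphB, rmorphD, rmorphN, rmorphM, rmorphXn).
have E8: phi (M8 f1 f2) = M8 (phi \o f1) (phi \o f2).
  by rewrite /M8 ?(rmorph_nat, Delta_morph, rmorphB, rmorphD, rmorphN, rmorphM, rmorphXn).
by rewrite E3 E5 E7 E8.
Qed.
Lemma vanish1 (F : numDomainType) (p : {poly F}) :
  (forall x, x != 0 -> p.[x] = 0) -> p = 0.
Proof.
move=> H; apply/eqP; apply/negPn/negP => nz.
set rs := [seq (i.+1)%:R : F | i <- iota 0 (size p)].
have H1 : all (root p) rs.
  by apply/allP => _ /mapP [i _ ->]; apply/rootP; apply: H; rewrite pnatr_eq0.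
have H2 : uniq rs.
  by rewrite map_inj_uniq ?iota_uniq // => i j /eqP; rewrite eqr_nat => /eqP [].
by move: (max_poly_roots nz H1 H2); rewrite size_map size_iota ltnn.
Qed.
Arguments vanish1 {F p}.

Lemma vanish3 (F : numDomainType) (Q : {poly {poly {poly F}}}) :
  (forall x y z, x != 0 -> y != 0 -> eval3 id Q x y z = 0) -> Q = 0.
Proof.
move=> H; apply/polyP => i; rewrite coef0.
have Hi : forall y z, y != 0 ->
   (map_poly (fun r : {poly F} => (map_poly id r).[z]) Q`_i).[y] = 0.
  move=> y z ny.
  have E0 := vanish1 (fun x nx => H x y z nx ny); move: (congr1 (fun P : {poly F} => P`_i) E0) => /=.
  by rewrite coef0 coef_map_id0 // map_poly0 horner0.
apply/polyP => j; rewrite coef0.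
have Hj : forall z, (map_poly id Q`_i`_j).[z] = 0.
  move=> z; have E0 := vanish1 (fun y ny => Hi y z ny); move: (congr1 (fun P : {poly F} => P`_j) E0) => /=.
  by rewrite coef0 coef_map_id0 // map_poly0 horner0.
apply/polyP => k; rewrite coef0.
have E0 := vanish1 (fun z _ => Hj z); move: (congr1 (fun P : {poly F} => P`_k) E0) => /=.
by rewrite coef0 coef_map_id0.
Qed.

Definition f1v {F : comNzRingType} (a b c : F) (n : nat) : F :=
  match n with 2 => a | 3 => b | 4 => c | _ => 0 end.
Definition f2v {F : comNzRingType} (a b c d : F) (n : nat) : F :=
  match n with 1 => a | 2 => b | 3 => c | 4 => d | _ => 0 end.


Section Neg.
Variable S : comNzRingType.
Variables f1 f2 : nat -> S.
Let n1 := fun n => - f1 n.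
Let n2 := fun n => - f2 n.
Lemma DeltaN a b : Delta n1 n2 a b = Delta f1 f2 a b.
Proof. by rewrite /Delta /n1 /n2 !mulrNN. Qed.
Lemma L3N : Lambda3 n1 n2 = Lambda3 f1 f2.
Proof. by rewrite /Lambda3 DeltaN. Qed.
Lemma L5N : Lambda5_1 n1 n2 = - Lambda5_1 f1 f2.
Proof. by rewrite /Lambda5_1 !DeltaN /n1 !mulrN opprB opprK addrC. Qed.
Lemma L7N : Lambda7_11 n1 n2 = Lambda7_11 f1 f2.
Proof. by rewrite /Lambda7_11 !DeltaN /n1 !sqrrN !mulrN !mulNr opprK. Qed.
Lemma M8N : M8 n1 n2 = M8 f1 f2.
Proof. by rewrite /M8 !DeltaN. Qed.
End Neg.

Lemma G_sym (F : numFieldType) (Q R : {poly {poly {poly F}}}) f1 f2 :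
  G Q R id f1 f2 = 0 -> G Q R id (fun n => - f1 n) (fun n => - f2 n) = 0 ->
  eval3 id Q (Lambda3 f1 f2) (Lambda7_11 f1 f2) (M8 f1 f2) = 0 /\
  Lambda5_1 f1 f2 * eval3 id R (Lambda3 f1 f2) (Lambda7_11 f1 f2) (M8 f1 f2) = 0.
Proof.
rewrite /G L3N L5N L7N M8N mulNr.
set q := eval3 _ Q _ _ _; set r := _ * eval3 _ R _ _ _ => H1 H2.
have E : (q + r) + (q - r) = q *+ 2 by rewrite addrACA subrr addr0 mulr2n.
have Hq : q *+ 2 = 0 by rewrite -E H1 H2 addr0.
have Hq0 : q = 0.
  by apply/eqP; move: Hq => /eqP; rewrite mulrn_eq0.
by split=> //; move: H1; rewrite Hq0 add0r.
Qed.

Arguments G_sym {F Q R f1 f2}.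

Section Vals.
Variable F : comNzRingType.
Variables a c p : F.
Let g1 := f1v a 0 c.
Let g2 := f2v p 0 0 0.
Lemma L3v : Lambda3 g1 g2 = - (a * p).
Proof. rewrite /Lambda3 /Delta /g1 /g2 /f1v /f2v /=.
by rewrite ?(expr0n, oppr0, mul0r, mulr0, subr0, sub0r, add0r, addr0, mulrN, mulNr, opprK, mulrNN, expr2). Qed.
Lemma L5v : Lambda5_1 g1 g2 = 3%:R * (a * p) * a.
Proof. rewrite /Lambda5_1 /Delta /g1 /g2 /f1v /f2v /=.
by rewrite ?(expr0n, oppr0, mul0r, mulr0, subr0, sub0r, add0r, addr0, mulrN, mulNr, opprK, mulrNN, expr2). Qed.
Lemma L7v : Lambda7_11 g1 g2 = 15%:R * (- (a * p)) * a ^+ 2.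
Proof. rewrite /Lambda7_11 /Delta /g1 /g2 /f1v /f2v /=.
by rewrite ?(expr0n, oppr0, mul0r, mulr0, subr0, sub0r, add0r, addr0, mulrN, mulNr, opprK, mulrNN, expr2). Qed.
Lemma M8v : M8 g1 g2 = 3%:R * (c * p) * (a * p).
Proof. rewrite /M8 /Delta /g1 /g2 /f1v /f2v /=.
by rewrite ?(expr0n, oppr0, mul0r, mulr0, subr0, sub0r, add0r, addr0, mulrN, mulNr, opprK, mulrNN, expr2). Qed.
End Vals.

Lemma pointwise (F : numClosedFieldType) (Q R : {poly {poly {poly F}}}) :
  (forall v1 v2 v3 v4 v5 v6 v7 : F, G Q R id (f1v v2 v4 v6) (f2v v1 v3 v5 v7) = 0) ->
  Q = 0 /\ R = 0.
Proof.
move=> H.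
have key : forall x y z : F, x != 0 -> y != 0 ->
    eval3 id Q x y z = 0 /\ eval3 id R x y z = 0.
  move=> x y z nx ny.
  have n15 : 15%:R != 0 :> F by rewrite pnatr_eq0.
  have n3 : 3%:R != 0 :> F by rewrite pnatr_eq0.
  have n15x : 15%:R * x != 0 by rewrite mulf_neq0.
  set a := sqrtC (y / (15%:R * x)).
  have a2 : a ^+ 2 = y / (15%:R * x) := sqrtCK _.
  have na : a != 0.
    apply: contraNneq ny => a0; move: a2; rewrite a0 expr2 mul0r => /esym /eqP.
    by rewrite mulf_eq0 invr_eq0 (negbTE n15x) orbF.
  set p := - (x / a).
  have ap : a * p = - x by rewrite /p mulrN mulrC divfK.
  have np : p != 0 by rewrite /p oppr_eq0 mulf_neq0 // invr_eq0.
  have nd : 3%:R * p * - x != 0 by rewrite !mulf_neq0 // oppr_eq0.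
  set c := z / (3%:R * p * - x).
  have f1neg : (fun n => - f1v a 0 c n) = f1v (- a) 0 (- c).
    by apply: functional_extensionality => -[|[|[|[|[|n]]]]]; rewrite /f1v ?oppr0.
  have f2neg : (fun n => - f2v p 0 0 0 n) = f2v (- p) 0 0 0.
    by apply: functional_extensionality => -[|[|[|[|[|n]]]]]; rewrite /f2v ?oppr0.
  have Hneg : G Q R id (fun n => - f1v a 0 c n) (fun n => - f2v p 0 0 0 n) = 0.
    by rewrite f1neg f2neg; apply: H.
  have := G_sym (H p a 0 0 0 c 0) Hneg.
  rewrite L3v L5v L7v M8v ap opprK a2 [15%:R * x * _]mulrC divfK //.
  have -> : 3%:R * (c * p) * - x = z.
    by rewrite mulrCA -mulrA divfK.
  have nL : 3%:R * - x * a != 0 by rewrite !mulf_neq0 // oppr_eq0.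
  by move=> [-> /eqP]; rewrite mulf_eq0 (negbTE nL) /= => /eqP ->.
split; apply: vanish3 => x y z nx ny; by case: (key x y z nx ny).
Qed.

Definition B1 (F : comNzRingType) : comNzRingType := {poly F}.
Definition B2 (F : comNzRingType) : comNzRingType := {poly B1 F}.
Definition B3 (F : comNzRingType) : comNzRingType := {poly B2 F}.
Definition B4 (F : comNzRingType) : comNzRingType := {poly B3 F}.
Definition B5 (F : comNzRingType) : comNzRingType := {poly B4 F}.
Definition B6 (F : comNzRingType) : comNzRingType := {poly B5 F}.
Definition B7 (F : comNzRingType) : comNzRingType := {poly B6 F}.

Lemma Gstep {F S T : comNzRingType} {Q R : {poly {poly {poly F}}}} (phi : {rmorphism S -> T}) {c f1 f2} :
  G Q R c f1 f2 = 0 -> G Q R (phi \o c) (phi \o f1) (phi \o f2) = 0.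
Proof. by move=> H; rewrite -G_morph H rmorph0. Qed.

Lemma G_ext {F S : comNzRingType} (Q R : {poly {poly {poly F}}}) (c c' : F -> S) f1 f1' f2 f2' :
  c =1 c' -> f1 =1 f1' -> f2 =1 f2' -> G Q R c f1 f2 = G Q R c' f1' f2'.
Proof.
move=> /functional_extensionality -> /functional_extensionality ->.
by move=> /functional_extensionality ->.
Qed.

Lemma Gstep2 {F A : comNzRingType} {Q R : {poly {poly {poly F}}}} (x : A)
  (c : F -> {poly A}) (f1 f2 : nat -> {poly A}) (c' : F -> A) (f1' f2' : nat -> A) :
  (forall a, (c a).[x] = c' a) -> (forall n, (f1 n).[x] = f1' n) -> (forall n, (f2 n).[x] = f2' n) ->
  G Q R c f1 f2 = 0 -> G Q R c' f1' f2' = 0.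
Proof.
move=> Hc H1 H2 H; have := Gstep (horner_eval x) H.
by rewrite (G_ext Q R (horner_eval x \o c) c' (horner_eval x \o f1) f1' (horner_eval x \o f2) f2' Hc H1 H2).
Qed.

Definition B0 (F : comNzRingType) : comNzRingType := F.
Definition L1 {F : comNzRingType} (a : B0 F) : B1 F := a%:P.
Definition Y1 (F : comNzRingType) : B1 F := 'X.
Definition L2 {F : comNzRingType} (a : B1 F) : B2 F := a%:P.
Definition Y2 (F : comNzRingType) : B2 F := 'X.
Definition L3 {F : comNzRingType} (a : B2 F) : B3 F := a%:P.
Definition Y3 (F : comNzRingType) : B3 F := 'X.
Definition L4 {F : comNzRingType} (a : B3 F) : B4 F := a%:P.
Definition Y4 (F : comNzRingType) : B4 F := 'X.
Definition L5 {F : comNzRingType} (a : B4 F) : B5 F := a%:P.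
Definition Y5 (F : comNzRingType) : B5 F := 'X.
Definition L6 {F : comNzRingType} (a : B5 F) : B6 F := a%:P.
Definition Y6 (F : comNzRingType) : B6 F := 'X.
Definition L7 {F : comNzRingType} (a : B6 F) : B7 F := a%:P.
Definition Y7 (F : comNzRingType) : B7 F := 'X.
Section Stages.
Variable F : comNzRingType.
Variables v1 v2 v3 v4 v5 v6 v7 : F.
Variables Q R : {poly {poly {poly F}}}.
Definition cs0 (a : F) : B0 F := a.
Definition g1_0 (n : nat) : B0 F := match n with 2 => v2 | 3 => v4 | 4 => v6 | _ => 0 end.
Definition g2_0 (n : nat) : B0 F := match n with 1 => v1 | 2 => v3 | 3 => v5 | 4 => v7 | _ => 0 end.
Definition cs1 (a : F) : B1 F := (L1 a).
Definition g1_1 (n : nat) : B1 F := match n with 2 => (L1 v2) | 3 => (L1 v4) | 4 => (L1 v6) | _ => 0 end.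
Definition g2_1 (n : nat) : B1 F := match n with 1 => (L1 v1) | 2 => (L1 v3) | 3 => (L1 v5) | 4 => (Y1 F) | _ => 0 end.
Definition cs2 (a : F) : B2 F := (L2 (L1 a)).
Definition g1_2 (n : nat) : B2 F := match n with 2 => (L2 (L1 v2)) | 3 => (L2 (L1 v4)) | 4 => (Y2 F) | _ => 0 end.
Definition g2_2 (n : nat) : B2 F := match n with 1 => (L2 (L1 v1)) | 2 => (L2 (L1 v3)) | 3 => (L2 (L1 v5)) | 4 => (L2 (Y1 F)) | _ => 0 end.
Definition cs3 (a : F) : B3 F := (L3 (L2 (L1 a))).
Definition g1_3 (n : nat) : B3 F := match n with 2 => (L3 (L2 (L1 v2))) | 3 => (L3 (L2 (L1 v4))) | 4 => (L3 (Y2 F)) | _ => 0 end.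
Definition g2_3 (n : nat) : B3 F := match n with 1 => (L3 (L2 (L1 v1))) | 2 => (L3 (L2 (L1 v3))) | 3 => (Y3 F) | 4 => (L3 (L2 (Y1 F))) | _ => 0 end.
Definition cs4 (a : F) : B4 F := (L4 (L3 (L2 (L1 a)))).
Definition g1_4 (n : nat) : B4 F := match n with 2 => (L4 (L3 (L2 (L1 v2)))) | 3 => (Y4 F) | 4 => (L4 (L3 (Y2 F))) | _ => 0 end.
Definition g2_4 (n : nat) : B4 F := match n with 1 => (L4 (L3 (L2 (L1 v1)))) | 2 => (L4 (L3 (L2 (L1 v3)))) | 3 => (L4 (Y3 F)) | 4 => (L4 (L3 (L2 (Y1 F)))) | _ => 0 end.
Definition cs5 (a : F) : B5 F := (L5 (L4 (L3 (L2 (L1 a))))).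
Definition g1_5 (n : nat) : B5 F := match n with 2 => (L5 (L4 (L3 (L2 (L1 v2))))) | 3 => (L5 (Y4 F)) | 4 => (L5 (L4 (L3 (Y2 F)))) | _ => 0 end.
Definition g2_5 (n : nat) : B5 F := match n with 1 => (L5 (L4 (L3 (L2 (L1 v1))))) | 2 => (Y5 F) | 3 => (L5 (L4 (Y3 F))) | 4 => (L5 (L4 (L3 (L2 (Y1 F))))) | _ => 0 end.
Definition cs6 (a : F) : B6 F := (L6 (L5 (L4 (L3 (L2 (L1 a)))))).
Definition g1_6 (n : nat) : B6 F := match n with 2 => (Y6 F) | 3 => (L6 (L5 (Y4 F))) | 4 => (L6 (L5 (L4 (L3 (Y2 F))))) | _ => 0 end.
Definition g2_6 (n : nat) : B6 F := match n with 1 => (L6 (L5 (L4 (L3 (L2 (L1 v1)))))) | 2 => (L6 (Y5 F)) | 3 => (L6 (L5 (L4 (Y3 F)))) | 4 => (L6 (L5 (L4 (L3 (L2 (Y1 F)))))) | _ => 0 end.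
Definition cs7 (a : F) : B7 F := (L7 (L6 (L5 (L4 (L3 (L2 (L1 a))))))).
Definition g1_7 (n : nat) : B7 F := match n with 2 => (L7 (Y6 F)) | 3 => (L7 (L6 (L5 (Y4 F)))) | 4 => (L7 (L6 (L5 (L4 (L3 (Y2 F)))))) | _ => 0 end.
Definition g2_7 (n : nat) : B7 F := match n with 1 => (Y7 F) | 2 => (L7 (L6 (Y5 F))) | 3 => (L7 (L6 (L5 (L4 (Y3 F))))) | 4 => (L7 (L6 (L5 (L4 (L3 (L2 (Y1 F))))))) | _ => 0 end.
Lemma stage7 : G Q R cs7 g1_7 g2_7 = 0 -> G Q R cs6 g1_6 g2_6 = 0.
Proof.
apply: (@Gstep2 F (B6 F) Q R (L6 (L5 (L4 (L3 (L2 (L1 v1)))))) cs7 g1_7 g2_7 cs6 g1_6 g2_6).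
- by move=> a; unfold cs7, cs6; exact: hornerC.
- case=> [|[|[|[|[|n]]]]]; unfold g1_7, g1_6; cbv beta iota; [ exact: horner0 | exact: horner0 | exact: hornerC | exact: hornerC | exact: hornerC | exact: horner0 ].
- case=> [|[|[|[|[|n]]]]]; unfold g2_7, g2_6; cbv beta iota; [ exact: horner0 | exact: hornerX | exact: hornerC | exact: hornerC | exact: hornerC | exact: horner0 ].
Qed.
Lemma stage6 : G Q R cs6 g1_6 g2_6 = 0 -> G Q R cs5 g1_5 g2_5 = 0.
Proof.
apply: (@Gstep2 F (B5 F) Q R (L5 (L4 (L3 (L2 (L1 v2))))) cs6 g1_6 g2_6 cs5 g1_5 g2_5).
- by move=> a; unfold cs6, cs5; exact: hornerC.
- case=> [|[|[|[|[|n]]]]]; unfold g1_6, g1_5; cbv beta iota; [ exact: horner0 | exact: horner0 | exact: hornerX | exact: hornerC | exact: hornerC | exact: horner0 ].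
- case=> [|[|[|[|[|n]]]]]; unfold g2_6, g2_5; cbv beta iota; [ exact: horner0 | exact: hornerC | exact: hornerC | exact: hornerC | exact: hornerC | exact: horner0 ].
Qed.
Lemma stage5 : G Q R cs5 g1_5 g2_5 = 0 -> G Q R cs4 g1_4 g2_4 = 0.
Proof.
apply: (@Gstep2 F (B4 F) Q R (L4 (L3 (L2 (L1 v3)))) cs5 g1_5 g2_5 cs4 g1_4 g2_4).
- by move=> a; unfold cs5, cs4; exact: hornerC.
- case=> [|[|[|[|[|n]]]]]; unfold g1_5, g1_4; cbv beta iota; [ exact: horner0 | exact: horner0 | exact: hornerC | exact: hornerC | exact: hornerC | exact: horner0 ].
- case=> [|[|[|[|[|n]]]]]; unfold g2_5, g2_4; cbv beta iota; [ exact: horner0 | exact: hornerC | exact: hornerX | exact: hornerC | exact: hornerC | exact: horner0 ].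
Qed.
Lemma stage4 : G Q R cs4 g1_4 g2_4 = 0 -> G Q R cs3 g1_3 g2_3 = 0.
Proof.
apply: (@Gstep2 F (B3 F) Q R (L3 (L2 (L1 v4))) cs4 g1_4 g2_4 cs3 g1_3 g2_3).
- by move=> a; unfold cs4, cs3; exact: hornerC.
- case=> [|[|[|[|[|n]]]]]; unfold g1_4, g1_3; cbv beta iota; [ exact: horner0 | exact: horner0 | exact: hornerC | exact: hornerX | exact: hornerC | exact: horner0 ].
- case=> [|[|[|[|[|n]]]]]; unfold g2_4, g2_3; cbv beta iota; [ exact: horner0 | exact: hornerC | exact: hornerC | exact: hornerC | exact: hornerC | exact: horner0 ].
Qed.
Lemma stage3 : G Q R cs3 g1_3 g2_3 = 0 -> G Q R cs2 g1_2 g2_2 = 0.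
Proof.
apply: (@Gstep2 F (B2 F) Q R (L2 (L1 v5)) cs3 g1_3 g2_3 cs2 g1_2 g2_2).
- by move=> a; unfold cs3, cs2; exact: hornerC.
- case=> [|[|[|[|[|n]]]]]; unfold g1_3, g1_2; cbv beta iota; [ exact: horner0 | exact: horner0 | exact: hornerC | exact: hornerC | exact: hornerC | exact: horner0 ].
- case=> [|[|[|[|[|n]]]]]; unfold g2_3, g2_2; cbv beta iota; [ exact: horner0 | exact: hornerC | exact: hornerC | exact: hornerX | exact: hornerC | exact: horner0 ].
Qed.
Lemma stage2 : G Q R cs2 g1_2 g2_2 = 0 -> G Q R cs1 g1_1 g2_1 = 0.
Proof.
apply: (@Gstep2 F (B1 F) Q R (L1 v6) cs2 g1_2 g2_2 cs1 g1_1 g2_1).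
- by move=> a; unfold cs2, cs1; exact: hornerC.
- case=> [|[|[|[|[|n]]]]]; unfold g1_2, g1_1; cbv beta iota; [ exact: horner0 | exact: horner0 | exact: hornerC | exact: hornerC | exact: hornerX | exact: horner0 ].
- case=> [|[|[|[|[|n]]]]]; unfold g2_2, g2_1; cbv beta iota; [ exact: horner0 | exact: hornerC | exact: hornerC | exact: hornerC | exact: hornerC | exact: horner0 ].
Qed.
Lemma stage1 : G Q R cs1 g1_1 g2_1 = 0 -> G Q R cs0 g1_0 g2_0 = 0.
Proof.
apply: (@Gstep2 F (B0 F) Q R v7 cs1 g1_1 g2_1 cs0 g1_0 g2_0).
- by move=> a; unfold cs1, cs0; exact: hornerC.
- case=> [|[|[|[|[|n]]]]]; unfold g1_1, g1_0; cbv beta iota; [ exact: horner0 | exact: horner0 | exact: hornerC | exact: hornerC | exact: hornerC | exact: horner0 ].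
- case=> [|[|[|[|[|n]]]]]; unfold g2_1, g2_0; cbv beta iota; [ exact: horner0 | exact: hornerC | exact: hornerC | exact: hornerC | exact: hornerX | exact: horner0 ].
Qed.

Lemma entry : combo Q R = 0 -> G Q R cs6 g1_6 g2_6 = 0.
Proof.
move=> H0.
have H0' : @G F (B7 F) Q R (@cst7 F) (f1sub F) (f2sub F) = 0 := H0.
apply: (@Gstep2 F (B6 F) Q R (L6 (L5 (L4 (L3 (L2 (L1 v1)))))) (@cst7 F) (f1sub F) (f2sub F) cs6 g1_6 g2_6 _ _ _ H0').
- by move=> a; unfold cst7; exact: hornerC.
- case=> [|[|[|[|[|n]]]]]; unfold f1sub, g1_6; cbv beta iota; [ exact: horner0 | exact: horner0 | exact: hornerC | exact: hornerC | exact: hornerC | exact: horner0 ].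
- case=> [|[|[|[|[|n]]]]]; unfold f2sub, g2_6; cbv beta iota; [ exact: horner0 | exact: hornerX | exact: hornerC | exact: hornerC | exact: hornerC | exact: horner0 ].
Qed.

Lemma combo_ev : combo Q R = 0 -> G Q R id (f1v v2 v4 v6) (f2v v1 v3 v5 v7) = 0.
Proof.
move=> H0.
have H := stage1 (stage2 (stage3 (stage4 (stage5 (stage6 (entry H0)))))).
exact: H.
Qed.
End Stages.

Theorem mainTheorem10 (F : numClosedFieldType) (Q R : {poly {poly {poly F}}}) :
  combo Q R = 0 <-> (Q = 0 /\ R = 0).
Proof.
split.
- move=> H; apply: pointwise => v1 v2 v3 v4 v5 v6 v7.
  exact: (combo_ev _ v1 v2 v3 v4 v5 v6 v7 _ _ H).
- by move=> [-> ->]; rewrite /combo /eval3 !map_poly0 !horner0 mulr0 addr0.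
Qed.
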